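(* Let $\mathcal{H}=(\mathcal{V},\mathcal{E})$ be a connected hypergraph and let $B(\mathcal{H})$ be its set of bridges. If $B(\mathcal{H})$ is a proper subset of $\mathcal{E}$ and the spanning sub-hypergraph $(\mathcal{V},B(\mathcal{H}))$ is connected, then $\lambda^2$ divides $P(\mathcal{H},\lambda)$.
   Context: A hypergraph $\mathcal{H}=(\mathcal{V},\mathcal{E})$ consists of a finite vertex set $\mathcal{V}$ and a set $\mathcal{E}$ of subsets of $\mathcal{V}$, each of size at least $1$, called edges. For a positive integer $\lambda$, a weak proper $\lambda$-colouring of $\mathcal{H}$ is a map $\phi:\mathcal{V}\to\{1,\dots,\lambda\}$ such that $|\{\phi(v):v\in e\}|>1$ for every $e\in\mathcal{E}$. $P(\mathcal{H},\lambda)$ denotes the number of weak proper $\lambda$-colourings of $\mathcal{H}$; it is a polynomial in $\lambda$. $\mathcal{H}$ is connected if for any two vertices $v_1,v_2$ there is a sequence of edges $e_0,\dots,e_k$ with $v_1\in e_0$, $v_2\in e_k$ and $e_i\cap e_{i+1}\neq\emptyset$ for all $i$. An edge $e$ of a connected hypergraph is a bridge if $\mathcal{H}-e$ (obtained by removing the edge $e$, keeping all vertices) is disconnected. *)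

(* Defs.v *)
From HB Require Import structures.
From mathcomp Require Import all_boot all_order all_algebra.
Set Implicit Arguments. Unset Strict Implicit. Unset Printing Implicit Defensive.
Import GRing.Theory.

(* A hypergraph on the finite vertex type V (vertex set = all of V) is given
   by its edge set E : {set {set V}}; every edge has size >= 1. *)
Definition hyper_edges_ok (V : finType) (E : {set {set V}}) : Prop :=
  forall e, e \in E -> 0 < #|e|.

Definition hconnected (V : finType) (E : {set {set V}}) : Prop :=
  forall v1 v2 : V, exists (e0 : {set V}) (s : seq {set V}),
    [/\ e0 \in E, all (fun e => e \in E) s, v1 \in e0, v2 \in last e0 s &
        path (fun a b : {set V} => a :&: b != set0) e0 s].

Definition is_bridge (V : finType) (E : {set {set V}}) (e : {set V}) : Prop :=
  e \in E /\ ~ hconnected (E :\ e).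

Definition weak_proper (V : finType) (E : {set {set V}}) (l : nat)
  (phi : {ffun V -> 'I_l}) : bool :=
  [forall e in E, exists x in e, exists y in e, phi x != phi y].

Definition ncol (V : finType) (E : {set {set V}}) (l : nat) : nat :=
  #|[set phi : {ffun V -> 'I_l} | weak_proper E phi]|.

(* p is the chromatic polynomial P(H, lambda): it agrees with the number of
   weak proper lambda-colourings at every positive integer lambda (this
   determines p uniquely). *)
Definition is_chrom_poly (V : finType) (E : {set {set V}}) (p : {poly int}) : Prop :=
  forall l : nat, (0 < l)%N -> (p.[l%:Z])%R = ((ncol E l)%:Z)%R.

(* Main.v *)
Require Import Defs.
From HB Require Import structures.
From mathcomp Require Import all_boot all_order all_algebra.
From mathcomp Require Import zify.
Import GRing.Theory.
Set Implicit Arguments. Unset Strict Implicit.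

Section G.
Variable V : finType.

Definition rF (F : {set {set V}}) : rel V :=
  fun x y => [exists e in F, (x \in e) && (y \in e)].

Lemma rF_sym F : symmetric (rF F).
Proof.
move=> x y; apply/existsP/existsP => -[e /andP[eF /andP[h1 h2]]];
  by exists e; rewrite eF h1 h2.
Qed.

Lemma rF_csym F : connect_sym (rF F).
Proof. exact: sym_connect_sym (rF_sym F). Qed.

Definition ncomp (F : {set {set V}}) : nat :=
  #|[set x | fingraph.root (rF F) x == x]|.

Lemma mono_hconn (F G : {set {set V}}) : hconnected F -> F \subset G -> hconnected G.
Proof.
move=> h sFG v1 v2; have [e0 [s [h1 h2 h3 h4 h5]]] := h v1 v2.
exists e0, s; split => //; first exact: (subsetP sFG).
by apply/allP => e /(allP h2) /(subsetP sFG).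
Qed.

Lemma epath_connect (F : {set {set V}}) e0 s a b :
  e0 \in F -> all (fun e => e \in F) s -> a \in e0 -> b \in last e0 s ->
  path (fun a b : {set V} => a :&: b != set0) e0 s -> connect (rF F) a b.
Proof.
elim: s e0 a => [|e1 s IH] e0 a /= e0F sF ae0 bl.
  move=> _; apply: connect1; apply/existsP; exists e0; by rewrite e0F ae0 bl.
case/andP: sF => e1F sF; case/andP => /set0Pn [y]; rewrite inE => /andP[ye0 ye1] p.
apply: (@connect_trans _ _ y); last exact: (IH e1).
apply: connect1; apply/existsP; exists e0; by rewrite e0F ae0 ye0.
Qed.

Lemma vpath_epath (F : {set {set V}}) x p :
  path (rF F) x p -> p != [::] ->
  exists (e0 : {set V}) (s : seq {set V}),
    [/\ e0 \in F, all (fun e => e \in F) s, x \in e0, last x p \in last e0 s &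
        path (fun a b : {set V} => a :&: b != set0) e0 s].
Proof.
elim: p x => [|y p IH] x //= /andP[/existsP[e /andP[eF /andP[xe ye]]] pp] _.
case: p IH pp => [|z p] IH pp.
  by exists e, [::]; split.
have [e0 [s [h1 h2 h3 h4 h5]]] := IH y pp isT.
exists e, (e0 :: s); split => //=; first by rewrite h1.
rewrite h5 andbT; apply/set0Pn; exists y; by rewrite inE ye h3.
Qed.

Lemma hconn_ncomp (F : {set {set V}}) (v0 : V) : hconnected F -> ncomp F = 1%N.
Proof.
move=> h.
have eq: forall x, fingraph.root (rF F) x = fingraph.root (rF F) v0.
  move=> x; apply/(fingraph.rootP (rF_csym F)).
  have [e0 [s [h1 h2 h3 h4 h5]]] := h x v0; exact: epath_connect h5.
rewrite /ncomp (_ : [set x | _] = [set fingraph.root (rF F) v0]) ?cards1 //.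
apply/setP => x; rewrite !inE; apply/idP/idP => [/eqP <-|/eqP ->]; first by rewrite eq.
by rewrite eq.
Qed.

Lemma ncomp_hconn (F : {set {set V}}) :
  (forall v : V, exists w, w != v) -> ncomp F = 1%N -> hconnected F.
Proof.
move=> h2 h1.
have cn: forall x y, connect (rF F) x y.
  move=> x y; apply/(fingraph.rootP (rF_csym F)).
  have := h1; rewrite /ncomp => /eqP/cards1P [r Hr].
  have : fingraph.root (rF F) x \in [set r] by rewrite -Hr inE; apply: roots_root; exact: rF_csym.
  have : fingraph.root (rF F) y \in [set r] by rewrite -Hr inE; apply: roots_root; exact: rF_csym.
  by rewrite !inE => /eqP -> /eqP ->.
have key: forall x y, x != y -> exists (e0 : {set V}) (s : seq {set V}),
    [/\ e0 \in F, all (fun e => e \in F) s, x \in e0, y \in last e0 s &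
        path (fun a b : {set V} => a :&: b != set0) e0 s].
  move=> x y nxy; have /connectP [p pp Ey] := cn x y.
  move: pp Ey; case: p => [|z p] pp Ey; first by rewrite /= Ey eqxx in nxy.
  rewrite Ey; exact: vpath_epath pp _.
move=> v1 v2; case: (eqVneq v1 v2) => [<-|]; last exact: key.
have [w nw] := h2 v1.
have nw' : v1 != w by rewrite eq_sym.
have [e0 [s [? ? ? ? ?]]] := key v1 w nw'.
by exists e0, [::]; split.
Qed.
End G.

Section C.
Variable V : finType.

Definition mono (F : {set {set V}}) {l} (phi : {ffun V -> 'I_l}) : bool :=
  [forall e in F, [forall x in e, [forall y in e, phi x == phi y]]].

Lemma mono_root F l (phi : {ffun V -> 'I_l}) :
  mono F phi = [forall x, phi x == phi (fingraph.root (rF F) x)].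
Proof.
have cs := rF_csym F.
apply/idP/idP.
  move=> hm.
  have h1: forall x y, rF F x y -> phi x = phi y.
    move=> x y /existsP [e /andP[eF /andP[xe ye]]].
    move/forall_inP: hm => /(_ e eF) /forall_inP /(_ x xe) /forall_inP /(_ y ye).
    by move/eqP.
  apply/forallP => x; apply/eqP.
  have /connectP [p pp ->] := connect_root (rF F) x.
  elim: p x pp => [|z p IH] x //= /andP[hxz pz].
  by rewrite (h1 _ _ hxz); apply: IH.
move/forallP=> h; apply/forall_inP => e eF; apply/forall_inP => x xe.
apply/forall_inP => y ye.
have: fingraph.root (rF F) x = fingraph.root (rF F) y.
  apply/(fingraph.rootP cs); apply: connect1; apply/existsP; exists e.
  by rewrite eF xe ye.
by move/eqP: (h x) => -> ->; move/eqP: (h y) => ->.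
Qed.

Lemma card_mono F l : #|[set phi : {ffun V -> 'I_l.+1} | mono F phi]| = l.+1 ^ ncomp F.
Proof.
have cs := rF_csym F.
set r := fingraph.root (rF F).
set D := [set x | r x == x].
pose f (psi : {ffun V -> 'I_l.+1}) := [ffun x => psi (r x)].
have -> : [set phi : {ffun V -> 'I_l.+1} | mono F phi] =
          [set f psi | psi in pffun_on ord0 D predT].
  apply/setP => phi; rewrite inE; apply/idP/imsetP.
    rewrite mono_root => /forallP h.
    exists [ffun x => if x \in D then phi x else ord0].
      apply/pffun_onP; split => //.
      apply/subsetP => x; rewrite !inE ffunE; case: ifP => [|_]; [by rewrite /D inE | by rewrite eqxx].
    apply/ffunP => x; rewrite !ffunE.
    have -> : r x \in D by rewrite inE /r root_root.
    by apply/eqP; apply: h.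
  move=> [psi _ ->]; rewrite mono_root; apply/forallP => x.
  by rewrite !ffunE /r root_root.
rewrite card_in_imset.
  rewrite card_pffun_on /ncomp -/r -/D; congr (_ ^ _).
  by rewrite -[RHS]card_ord; apply: eq_card.
move=> p1 p2 /pffun_onP [s1 _] /pffun_onP [s2 _] e; apply/ffunP => x.
case xD: (x \in D).
  move: xD; rewrite inE => /eqP rx.
  by move/ffunP: e => /(_ x); rewrite !ffunE rx.
have: x \notin ord0.-support p1 by apply/negP => /(subsetP s1); rewrite xD.
have: x \notin ord0.-support p2 by apply/negP => /(subsetP s2); rewrite xD.
by rewrite !inE !negbK => /eqP -> /eqP ->.
Qed.
End C.

Local Open Scope ring_scope.

Definition tog (T : finType) (x : T) (F : {set T}) : {set T} :=
  if x \in F then F :\ x else x |: F.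

Lemma togK (T : finType) (x : T) : involutive (tog x).
Proof.
move=> F; rewrite /tog; case: (boolP (x \in F)) => xF.
  by rewrite setD11 setD1K.
by rewrite setU11 setU1K.
Qed.

Lemma tog_sign (T : finType) (x : T) (F : {set T}) :
  (-1) ^+ #|tog x F| = - ((-1) ^+ #|F|) :> int.
Proof.
rewrite /tog; case: ifP => xF.
  by rewrite [in RHS](cardsD1 x) xF add1n exprS mulN1r opprK.
by rewrite cardsU1 xF add1n exprS mulN1r.
Qed.

Lemma sum_tog (T : finType) (x : T) (P : pred {set T}) (c : {set T} -> int) :
  (forall F, P (tog x F) = P F) -> (forall F, c (tog x F) = - c F) ->
  \sum_(F | P F) c F = 0.
Proof.
move=> hP hc.
have : \sum_(F | P F) c F = - \sum_(F | P F) c F.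
  rewrite {1}(reindex_inj (inv_inj (togK x))) /= -sumrN.
  by apply: eq_big => [F|F _]; rewrite ?hP ?hc.
move: (\sum_(F | P F) c F) => S; lia.
Qed.

Lemma alt_sum (T : finType) (A : {set T}) :
  \sum_(F : {set T} | F \subset A) (-1) ^+ #|F| = (A == set0)%:R :> int.
Proof.
case: (set_0Vmem A) => [->|[x xA]].
  rewrite eqxx (eq_bigl (fun F => F == set0)); last by move=> F; rewrite subset0.
  by rewrite big_pred1_eq cards0.
have -> : (A == set0) = false by apply/negbTE/set0Pn; exists x.
transitivity (0:int); last by [].
apply: (@sum_tog _ x (fun F => F \subset A)) => F; last exact: tog_sign.
rewrite /tog; case: ifP => xF.
  apply/idP/idP => h; last by apply: subset_trans h; apply: subD1set.
  apply/subsetP => y yF; case: (eqVneq y x) => [->//|nyx].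
  by apply: (subsetP h); rewrite !inE nyx.
by rewrite subUset sub1set xA.
Qed.

Lemma card_sum (T : finType) (A : pred T) : (#|A|)%:Z = \sum_i (i \in A)%:R.
Proof.
rewrite -sum1_card big_mkcond /=.
apply: (big_ind2 (fun (n : nat) (z : int) => n%:Z = z)) => //.
  by move=> a b c d <- <-; rewrite PoszD.
by move=> i _; case: (i \in A).
Qed.

Section IE.
Variable V : finType.
Variable E : {set {set V}}.

Definition Mset l (phi : {ffun V -> 'I_l}) : {set {set V}} :=
  [set e in E | [forall x in e, [forall y in e, phi x == phi y]]].

Lemma mono_M l (phi : {ffun V -> 'I_l}) (F : {set {set V}}) : F \subset E -> mono F phi = (F \subset Mset phi).
Proof.
move=> FE; apply/forall_inP/subsetP => [h e eF|h e eF].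
  by rewrite inE (subsetP FE) //= h.
by have := h e eF; rewrite inE => /andP[].
Qed.

Lemma wp_M l (phi : {ffun V -> 'I_l}) : weak_proper E phi = (Mset phi == set0).
Proof.
apply/forall_inP/eqP => [h|h e eE].
  apply/setP => e; rewrite !inE; apply/negbTE/negP => /andP[eE /forall_inP hm].
  have /exists_inP [x xe /exists_inP [y ye hne]] := h e eE.
  by move/forall_inP: (hm x xe) => /(_ y ye) hxy; rewrite hxy in hne.
apply: contraT => hn.
have : e \in Mset phi.
  rewrite inE eE; apply/forall_inP => x xe; apply/forall_inP => y ye.
  apply: contraT => hxy; case/negP: hn; apply/exists_inP; exists x => //.
  by apply/exists_inP; exists y.
by rewrite h inE.
Qed.

Lemma incl_excl l :
  (ncol E l)%:Z = \sum_(F : {set {set V}} | F \subset E) (-1) ^+ #|F| *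
                    (#|[set phi : {ffun V -> 'I_l} | mono F phi]|)%:Z.
Proof.
have h1 : \sum_(F : {set {set V}} | F \subset E) (-1) ^+ #|F| *
            (#|[set phi : {ffun V -> 'I_l} | mono F phi]|)%:Z =
          \sum_(F : {set {set V}} | F \subset E) \sum_(phi : {ffun V -> 'I_l})
             ((-1) ^+ #|F| * (F \subset Mset phi)%:R).
  apply: eq_bigr => F FE; rewrite card_sum big_distrr /=.
  by apply: eq_bigr => phi _; rewrite inE mono_M.
rewrite h1 exchange_big /= /ncol card_sum; apply: eq_bigr => phi _.
rewrite inE wp_M -alt_sum.
rewrite (eq_bigl (fun F : {set {set V}} => (F \subset E) && (F \subset Mset phi)) (fun F : {set {set V}} => (-1) ^+ #|F|)); last first.
  move=> F; apply/idP/idP => [h|/andP[]//]; rewrite h andbT.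
  by apply: subset_trans h _; apply/subsetP => e; rewrite inE => /andP[].
rewrite big_mkcondr /=; apply: eq_bigr => F _.
by case: (F \subset Mset phi); rewrite ?mulr1 ?mulr0.
Qed.
End IE.

Unset Implicit Arguments.

Theorem theorem3 (V : finType) (E : {set {set V}}) (B : {set {set V}}) :
  hyper_edges_ok E ->
  hconnected E ->
  (forall e, e \in B <-> is_bridge E e) ->
  B \proper E ->
  hconnected B ->
  exists p : {poly int}, is_chrom_poly E p /\ ('X ^+ 2 %| p).
Proof.
move=> hok hE hB BE hBc.
case: (boolP [exists e in E, #|e| <= 1]%N) => [/exists_inP [e eE e1]|hbig].
  exists 0; split; last exact: dvdp0.
  move=> l _; rewrite horner0 /ncol.
  suff -> : [set phi : {ffun V -> 'I_l} | weak_proper E phi] = set0 by rewrite cards0.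
  apply/setP => phi; rewrite !inE; apply/negbTE/negP => /forall_inP /(_ e eE).
  case/exists_inP => x xe /exists_inP [y ye].
  move/card_le1P: e1 => /(_ x xe) h; move: ye; rewrite h inE => /eqP ->.
  by rewrite eqxx.
have big2 : forall e, e \in E -> (1 < #|e|)%N.
  move=> e eE; move/exists_inP: hbig => hb; rewrite ltnNge; apply/negP => h.
  by apply: hb; exists e.
have [_ [e0 e0E e0B]] := properP BE.
have [a [b [ae be nab]]] := card_gt1P (big2 e0 e0E).
have hw : forall v : V, exists w, w != v.
  move=> v; case: (eqVneq v a) => [->|nva]; last by exists a; rewrite eq_sym.
  by exists b; rewrite eq_sym.
pose P (F : {set {set V}}) := (F \subset E) && (ncomp F == 1%N).
have hP1 : forall F, P F -> P (tog e0 F).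
  move=> F /andP [FE /eqP c1].
  have hF := ncomp_hconn hw c1.
  have BF : B \subset F.
    apply/subsetP => x xB; apply: contraT => xF.
    have [xE hx] := (hB x).1 xB; case: hx; apply: (mono_hconn hF).
    apply/subsetP => y yF; rewrite !inE (subsetP FE) // andbT.
    by apply: contraNneq xF => <-.
  have BtF : B \subset tog e0 F.
    apply/subsetP => x xB; have xF := subsetP BF x xB.
    have nxe : x != e0 by apply: contraNneq e0B => <-.
    by rewrite /tog; case: ifP => _; rewrite !inE ?nxe ?xF ?orbT.
  apply/andP; split.
    rewrite /tog; case: ifP => _; last by rewrite subUset sub1set e0E.
    by apply: subset_trans FE; apply: subD1set.
  by rewrite (hconn_ncomp a (mono_hconn hBc BtF)).
have hP : forall F, P (tog e0 F) = P F.
  move=> F; apply/idP/idP; last exact: hP1.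
  by move/hP1; rewrite togK.
have ncomp_pos : forall F : {set {set V}}, (0 < ncomp F)%N.
  move=> F; rewrite /ncomp card_gt0; apply/set0Pn.
  exists (fingraph.root (rF F) a); rewrite inE root_root //; exact: rF_csym.
exists (\sum_(F : {set {set V}} | F \subset E) ((-1) ^+ #|F|) *: 'X^(ncomp F)).
split.
  move=> [//|l] _; rewrite horner_sum incl_excl; apply: eq_bigr => F _.
  by rewrite hornerZ hornerXn card_mono -[Posz (_ ^ _)]natz natrX natz.
rewrite (bigID (fun F => ncomp F == 1%N)) /=.
apply: dvdp_add.
  rewrite (eq_bigr (fun F : {set {set V}} => (-1) ^+ #|F| *: 'X)); last first.
    by move=> F /andP[_ /eqP ->]; rewrite expr1.
  rewrite -scaler_suml.
  rewrite (sum_tog (P := P) (x := e0)) ?scale0r ?dvdp0 //.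
  exact: tog_sign.
rewrite (eq_bigr (fun F : {set {set V}} => 'X ^+ 2 * ((-1) ^+ #|F| *: 'X^(ncomp F - 2)))); last first.
  move=> F /andP[_ n1]; rewrite -scalerAr -exprD subnKC //.
  by have := ncomp_pos F; case: (ncomp F) n1 => [|[|n]].
by rewrite -big_distrr /=; apply: dvdp_mulr; apply: dvdpp.
Qed.
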